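(* The forgetful functor $\Phi:\mathrm{OS}_B^{\mathrm{op}}\to\mathrm{FS}_B^{\mathrm{op}}$ has property (F).
   Context: $\mathrm{FS}_B$: objects $(E,\sigma)$ with $E$ a finite set and $\sigma$ an involution with a unique fixed point; morphisms are surjective equivariant maps. $\mathrm{OS}_B$: objects $(E,\sigma)$ with $E$ totally ordered finite, $\sigma$ an order-reversing involution with unique fixed point $0$; with $-e:=\sigma(e)$, $E^+=\{e>0\}$, $|e|=\max\{\pm e\}$, $\mathrm{init}\,D=\min\{|e|:e\in D\}$, the morphisms $(E_1,\sigma_1)\to(E_2,\sigma_2)$ are surjective equivariant maps $\varphi$ with (i) $\mathrm{init}\,\varphi^{-1}(e)\in\varphi^{-1}(e)$ for all $e\in E_2^+$ and (ii) $\mathrm{init}\,\varphi^{-1}(e)<\mathrm{init}\,\varphi^{-1}(f)$ for all $e<f$ in $E_2^+$. A functor $\Phi:\mathcal C\to\mathcal C'$ has property (F) if for every object $x$ of $\mathcal C'$ there are finitely many objects $y_1,\dots,y_s$ of $\mathcal C$ and morphisms $\varphi_i:x\to\Phi(y_i)$ such that for every object $y$ of $\mathcal C$ and morphism $\varphi:x\to\Phi(y)$ there are $i$ and a morphism $\psi:y_i\to y$ in $\mathcal C$ with $\varphi=\Phi(\psi)\circ\varphi_i$. *)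

(* Defs.v *)
From mathcomp Require Import all_boot.
Set Implicit Arguments. Unset Strict Implicit. Unset Printing Implicit Defensive.

Record fsB := FSB {
  fs_car :> finType;
  fs_sig : fs_car -> fs_car;
  fs_invol : involutive fs_sig;
  fs_fix : exists! x, fs_sig x = x }.

Definition fs_hom (X Y : fsB) (f : X -> Y) : Prop :=
  (forall y : Y, exists x : X, f x = y) /\
  (forall x : X, f (@fs_sig X x) = @fs_sig Y (f x)).

Record osB := OSB {
  os_car :> finType;
  os_le : rel os_car;
  os_le_refl : reflexive os_le;
  os_le_anti : antisymmetric os_le;
  os_le_trans : transitive os_le;
  os_le_total : total os_le;
  os_sig : os_car -> os_car;
  os_invol : involutive os_sig;
  os_rev : forall x y, os_le x y -> os_le (os_sig y) (os_sig x);
  os_fix : exists! x, os_sig x = x }.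

Definition os_lt (E : osB) (x y : E) : bool := os_le x y && (x != y).

Definition os_pos (E : osB) (e : E) : bool :=
  [exists z, (os_sig z == z) && os_lt z e].

Definition os_abs (E : osB) (e : E) : E :=
  if os_le (os_sig e) e then e else os_sig e.

Definition is_init (E : osB) (D : pred E) (m : E) : Prop :=
  (exists2 d, D d & m = os_abs d) /\ (forall d, D d -> os_le m (os_abs d)).

Definition os_hom (E1 E2 : osB) (phi : E1 -> E2) : Prop :=
  [/\ (forall y : E2, exists x : E1, phi x = y),
      (forall x : E1, phi (os_sig x) = os_sig (phi x)),
      (forall e : E2, os_pos e ->
         forall m, is_init (fun x => phi x == e) m -> phi m = e) &
      (forall e f : E2, os_pos e -> os_pos f -> os_lt e f ->
         forall m n, is_init (fun x => phi x == e) m ->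
                     is_init (fun x => phi x == f) n -> os_lt m n)].

Lemma os_fs_invol (E : osB) : involutive (@os_sig E).
Proof. exact: os_invol. Qed.
Lemma os_fs_fix (E : osB) : exists! x, @os_sig E x = x.
Proof. exact: os_fix. Qed.

Definition Phi (E : osB) : fsB := @FSB (os_car E) (@os_sig E) (@os_fs_invol E) (@os_fs_fix E).
(* Phi acts as the identity on morphisms (same underlying map). *)

(* Main.v *)
Require Import Defs.
From mathcomp Require Import all_boot.

Section Gen.
Variable E : osB.
Implicit Types a b e : E.

Lemma osle_total_cases a b : os_le a b \/ os_le b a.
Proof. by move: (os_le_total a b) => /orP. Qed.

Lemma abs_cases e : os_abs e = e \/ os_abs e = os_sig e.
Proof. by rewrite /os_abs; case: ifP; [left|right]. Qed.

Lemma abs_sig e : os_abs (os_sig e) = os_abs e.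
Proof.
rewrite /os_abs os_invol; case: ifP => H1; case: ifP => H2 //.
- by apply: os_le_anti; rewrite H1 H2.
- by case: (osle_total_cases e (os_sig e)); rewrite ?H1 ?H2.
Qed.

Lemma abs_eq a b : os_abs a = os_abs b -> a = b \/ a = os_sig b.
Proof.
have Ha : a = os_abs a \/ a = os_sig (os_abs a).
  by case: (abs_cases a) => ->; [left|right; rewrite os_invol].
case: (abs_cases b) => -> E1; rewrite E1 in Ha; case: Ha => ->;
  by [left|right|right; rewrite os_invol|left; rewrite os_invol].
Qed.

Variable o : E.
Hypothesis ho : os_sig o = o.

Lemma abs_fix : os_abs o = o.
Proof. by rewrite /os_abs ho os_le_refl. Qed.

Lemma o_le_abs e : os_le o (os_abs e).
Proof.
rewrite /os_abs; case: ifP => H.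
- case: (osle_total_cases o e) => // He.
  have := os_rev He; rewrite ho => H2; exact: os_le_trans H2 H.
- case: (osle_total_cases o (os_sig e)) => // He.
  have := os_rev He; rewrite ho os_invol => H2.
  case: (osle_total_cases e (os_sig e)) => H3; last by rewrite H3 in H.
  exact: os_le_trans H2 H3.
Qed.

Lemma abs_o e : os_abs e = o -> e = o.
Proof.
case: (abs_cases e) => -> // He.
by rewrite -(os_invol e) He ho.
Qed.

Definition rk (z : E) := #|[pred w | os_le w z]|.

Lemma rk_le a b : os_le a b = (rk a <= rk b).
Proof.
apply/idP/idP => H.
  apply: subset_leq_card; apply/subsetP => w; rewrite !inE => Hw.
  exact: os_le_trans Hw H.
apply/negPn/negP => Hn.
case: (osle_total_cases a b) => H2; first by rewrite H2 in Hn.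
have : rk b < rk a.
  apply: proper_card; apply/properP; split.
    apply/subsetP => w; rewrite !inE => Hw; exact: os_le_trans Hw H2.
  exists a; rewrite !inE ?os_le_refl //.
by rewrite ltnNge H.
Qed.

Lemma min_exists (P : pred E) z1 : P z1 ->
  exists z, P z /\ forall w, P w -> os_le (os_abs z) (os_abs w).
Proof.
move=> Pz1; case: (arg_minnP (fun z => rk (os_abs z)) Pz1) => z Pz Hz.
by exists z; split => // w Pw; rewrite rk_le; apply: Hz.
Qed.

End Gen.

Section OnX.
Variable X : fsB.

Definition valid (r : {ffun X * X -> bool}) : bool :=
  [&& [forall x, r (x, x)],
      [forall x, forall y, (r (x, y) && r (y, x)) ==> (x == y)],
      [forall x, forall y, forall z, (r (x, y) && r (y, z)) ==> r (x, z)],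
      [forall x, forall y, r (x, y) || r (y, x)] &
      [forall x, forall y, r (x, y) ==> r (fs_sig y, fs_sig x)]].

Local Notation VT := {r : {ffun X * X -> bool} | valid r}.

Section T.
Variable t : VT.
Let rr : rel X := fun x y => val t (x, y).
Let V := valP t.

Lemma v_refl : reflexive rr.
Proof. by case/and5P: V => /forallP H _ _ _ _ x; apply: H. Qed.
Lemma v_anti : antisymmetric rr.
Proof.
case/and5P: V => _ /forallP H _ _ _ x y Hxy.
by apply/eqP; move: (H x) => /forallP /(_ y) /implyP; apply.
Qed.
Lemma v_trans : transitive rr.
Proof.
case/and5P: V => _ _ /forallP H _ _ y x z H1 H2.
by move: (H x) => /forallP /(_ y) /forallP /(_ z) /implyP; apply; rewrite /rr in H1 H2 *; rewrite H1 H2.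
Qed.
Lemma v_total : total rr.
Proof. by case/and5P: V => _ _ _ /forallP H _ x y; move: (H x) => /forallP; apply. Qed.
Lemma v_rev x y : rr x y -> rr (fs_sig y) (fs_sig x).
Proof. by case/and5P: V => _ _ _ _ /forallP H; move: (H x) => /forallP /(_ y) /implyP. Qed.
End T.

Definition mkOS (t : VT) : osB :=
  @OSB X (fun x y => val t (x, y)) (@v_refl t) (@v_anti t) (@v_trans t)
    (@v_total t) (@fs_sig X) (@fs_invol X) (@v_rev t) (@fs_fix X).

Section Z.
Variables (Z : osB) (f : Z -> X).
Hypothesis fsurj : forall x : X, exists z : Z, f z = x.
Hypothesis feq : forall z : Z, f (os_sig z) = fs_sig (f z).
Variable z0 : Z.
Hypothesis hz0 : os_sig z0 = z0.

Definition h (x : X) : Z :=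
  odflt z0 [pick z | (f z == x) && [forall w, (f w == x) ==> os_le (os_abs z) (os_abs w)]].

Lemma h_spec x : f (h x) = x /\ forall w, f w = x -> os_le (os_abs (h x)) (os_abs w).
Proof.
rewrite /h; case: pickP => [z /andP[/eqP -> /forallP H]|H] /=.
  by split => // w Hw; move: (H w) => /implyP; apply; rewrite Hw.
case: (fsurj x) => z1 Hz1.
case: (@min_exists Z (fun z => f z == x) z1) => [|z [/eqP Pz Hz]]; first by rewrite Hz1.
move: (H z); rewrite Pz eqxx /=; move/negP; case.
by apply/forallP => w; apply/implyP => /Hz.
Qed.

Lemma fz0 : f z0 = f z0 /\ fs_sig (f z0) = f z0.
Proof. by rewrite -feq hz0. Qed.

Lemma fix_unique (x y : X) : fs_sig x = x -> fs_sig y = y -> x = y.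
Proof.
case: (fs_fix X) => c [_ Hc] Hx Hy.
by rewrite -(Hc _ Hx) -(Hc _ Hy).
Qed.

Lemma h_uniq x z : f z = x -> (forall w, f w = x -> os_le (os_abs z) (os_abs w)) -> z = h x.
Proof.
move=> Fz Hz; case: (h_spec x) => Fh Hh.
have Eab : os_abs z = os_abs (h x).
  by apply: os_le_anti; rewrite Hz // Hh.
case: (boolP (fs_sig x == x)) => [/eqP xf|xnf].
  have fz0x : f z0 = x by apply: fix_unique => //; case: fz0.
  have A1 : os_abs z = z0.
    apply: os_le_anti; rewrite (@o_le_abs Z z0 hz0) andbT.
    by rewrite -[X in os_le _ X](@abs_fix Z z0 hz0); apply: Hz.
  have A2 : os_abs (h x) = z0 by rewrite -Eab.
  by rewrite (@abs_o Z z0 hz0 _ A1) (@abs_o Z z0 hz0 _ A2).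
case: (@abs_eq Z _ _ Eab) => // Ez.
have : f z = fs_sig x by rewrite Ez feq Fh.
  by rewrite Fz => Hx; rewrite -Hx eqxx in xnf.
Qed.

Lemma h_sig x : h (fs_sig x) = os_sig (h x).
Proof.
case: (h_spec x) => Fh Hh.
symmetry; apply: h_uniq; first by rewrite feq Fh.
move=> w Fw; rewrite abs_sig -(@abs_sig Z w); apply: Hh.
by rewrite feq Fw fs_invol.
Qed.

Lemma h_fix x : fs_sig x = x -> h x = z0.
Proof.
move=> xf; have : os_sig (h x) = h x by rewrite -h_sig xf.
case: (os_fix Z) => c [_ Hc] H1.
by rewrite -(Hc _ H1) -(Hc _ hz0).
Qed.

Lemma h_init (t : VT) (Ht : forall x y, val t (x, y) = os_le (h x) (h y)) e m :
  @os_pos (mkOS t) e -> is_init (fun x => f x == e) m -> m = h e.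
Proof.
move=> /existsP [z /andP [/eqP zf /andP [le ne]]].
have le' : os_le z0 (h e).
  by move: le; rewrite /= Ht (h_fix _ zf).
have ae : os_abs (h e) = h e.
  rewrite /os_abs; case: ifP => // Hn.
  have := os_rev le'; rewrite hz0 => H2.
  by rewrite (os_le_trans H2 le') in Hn.
case: (h_spec e) => Fh Hh.
case=> [[d /eqP Fd ->] Hm].
apply: os_le_anti; apply/andP; split.
  by rewrite -ae; apply: Hm; rewrite /= Fh.
rewrite -[X in os_le X _]ae; exact: Hh.
Qed.

Lemma hom_lemma (t : VT) (Ht : forall x y, val t (x, y) = os_le (h x) (h y)) :
  @os_hom Z (mkOS t) f.
Proof.
split => //.
- move=> e pe m Hm; by rewrite (@h_init t Ht _ _ pe Hm); case: (h_spec e).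
- move=> e g pe pg /andP [le ne] m n Hm Hn.
  rewrite (@h_init t Ht _ _ pe Hm) (@h_init t Ht _ _ pg Hn) /os_lt.
  move: le; rewrite /= Ht => -> /=.
  apply/negP => /eqP Heq; move: ne; rewrite -(proj1 (h_spec e)) Heq.
  by rewrite (proj1 (h_spec g)) eqxx.
Qed.

Lemma valid_h : valid [ffun p => os_le (h p.1) (h p.2)].
Proof.
apply/and5P; split.
- by apply/forallP => x; rewrite ffunE os_le_refl.
- apply/forallP => x; apply/forallP => y; apply/implyP; rewrite !ffunE => H.
  have := os_le_anti H => Hh.
  by rewrite -(proj1 (h_spec x)) Hh (proj1 (h_spec y)).
- apply/forallP => x; apply/forallP => y; apply/forallP => z; apply/implyP.
  by rewrite !ffunE => /andP [H1 H2]; apply: os_le_trans H1 H2.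
- by apply/forallP => x; apply/forallP => y; rewrite !ffunE os_le_total.
- apply/forallP => x; apply/forallP => y; apply/implyP; rewrite !ffunE /= !h_sig.
  exact: os_rev.
Qed.

End Z.
End OnX.
Notation VT X := {r : {ffun (fs_car X) * (fs_car X) -> bool} | @valid X r}.

Theorem lemmaF :
  forall X : fsB,
  exists s : nat, exists Y : 'I_s -> osB,
  exists phi : forall i : 'I_s, Phi (Y i) -> X,
    (forall i, fs_hom (phi i)) /\
    (forall (Z : osB) (f : Phi Z -> X), fs_hom f ->
       exists i : 'I_s, exists psi : Z -> Y i,
         os_hom psi /\ (forall z : Z, f z = phi i (psi z))).
Proof.
move=> X.
exists #|{: VT X}|, (fun i => @mkOS X (enum_val i)).
exists (fun i (x : Phi (@mkOS X (enum_val i))) => (x : fs_car X)).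
split.
  by move=> i; split => // y; exists y.
move=> Z f [fsurj feq].
case: (os_fix Z) => z0 [hz0 _].
pose t := exist (fun r => @valid X r) _ (@valid_h X Z f fsurj feq z0 hz0).
exists (enum_rank t), f; split => //.
apply: (@hom_lemma X Z f fsurj feq z0 hz0).
by move=> x y; rewrite enum_rankK /= ffunE.
Qed.
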